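(* Let $D_{-}F(z)=F(z)-F(z-1)$, applied coefficientwise. Then \[ D_{-}H_B(z)=-\sum_{k=0}^{\infty}Y_{-k}(z-1)^k\,H_B(z), \] equivalently $H_B(z+1)-H_B(z)=-\sum_{k\ge0}Y_{-k}z^kH_B(z+1)$.
   Context: Normalized multiple Bernoulli polynomials: for integers $k\ge0$, $\zeta(-k|z)=-\frac{B_{k+1}(z)}{k+1}$ ($B_n(z)$ the Bernoulli polynomials, $B_n=B_n(0)$), and for $r\ge2$, $k_j\ge0$, $\zeta(-k_1,\ldots,-k_r|z)=-\frac{1}{k_r+1}\zeta(-k_1,\ldots,-k_{r-2},-k_{r-1}-k_r-1|z)-\frac12\zeta(-k_1,\ldots,-k_{r-2},-k_{r-1}-k_r|z)+\sum_{q=1}^{k_r}(-k_r)_q\frac{B_{q+1}}{(q+1)!}\zeta(-k_1,\ldots,-k_{r-2},-k_{r-1}-k_r+q|z)$, with $(a)_q=a(a+1)\cdots(a+q-1)$; the depth-zero (empty tuple) value is $1$. Let $\{Y_{-n}\}_{n\ge0}$ be non-commuting formal variables and \[ H_B(z)=\sum\zeta(-n_1,\ldots,-n_r|z)\,Y_{-n_1}\cdots Y_{-n_r}, \] the sum over all tuples (including the empty tuple, $r=0$) of non-positive integers. *)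

(* Defs.v *)
From mathcomp Require Import all_boot all_order all_algebra.
Set Implicit Arguments. Unset Strict Implicit. Unset Printing Implicit Defensive.
Import Order.TTheory GRing.Theory Num.Theory.
Local Open Scope ring_scope.

Section Defs.
Variable R : numFieldType.

(* Bernoulli numbers B_0, ..., B_n (convention B_1 = -1/2), via
   B_0 = 1 and B_m = -1/(m+1) * sum_{k<m} C(m+1,k) B_k. *)
Fixpoint bern_list (n : nat) : seq R :=
  match n with
  | 0 => [:: 1]
  | n'.+1 => let l := bern_list n' in
      rcons l (- (n'.+2%:R)^-1 *
               \sum_(k < n'.+1) ('C(n'.+2, k))%:R * nth 0 l k)
  end.

Definition bern (n : nat) : R := nth 0 (bern_list n) n.

Definition bernpoly (n : nat) (z : R) : R :=
  \sum_(k < n.+1) ('C(n, k))%:R * bern k * z ^+ (n - k).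

Definition poch (a : R) (q : nat) : R := \prod_(i < q) (a + i%:R).

(* zetaR fuel rs z : rs is the REVERSED tuple (k_r :: k_{r-1} :: ... :: k_1),
   representing zeta(-k_1,...,-k_r | z); fuel = depth. *)
Fixpoint zetaR (n : nat) (rs : seq nat) (z : R) : R :=
  match n with
  | 0 => 1
  | n'.+1 =>
    match rs with
    | [::] => 1
    | [:: k] => - bernpoly k.+1 z / k.+1%:R
    | kr :: kr1 :: rest =>
        - (kr.+1%:R)^-1 * zetaR n' ((kr1 + kr).+1 :: rest) z
        - 2%:R^-1 * zetaR n' ((kr1 + kr) :: rest) z
        + \sum_(1 <= q < kr.+1)
            poch (- kr%:R) q * bern q.+1 / (q.+1)`!%:R
              * zetaR n' ((kr1 + kr - q)%N :: rest) z
    end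
  end.

Definition zeta (s : seq nat) (z : R) : R := zetaR (size s) (rev s) z.

(* Formal non-commutative power series in the letters Y_{-n} (n : nat):
   coefficient function on words; the word [:: n_1; ...; n_r] stands for
   Y_{-n_1} ... Y_{-n_r}. *)
Definition ncseries := seq nat -> R.

Definition ncmul (F G : ncseries) : ncseries :=
  fun w => \sum_(i < (size w).+1) F (take i w) * G (drop i w).

Definition Ylin (c : nat -> R) : ncseries :=
  fun w => if w is [:: k] then c k else 0.

Definition HB (z : R) : ncseries := fun w => zeta w z.

Definition Dminus (F : R -> ncseries) (z : R) : ncseries :=
  fun w => F z w - F (z - 1) w.

End Defs.

(* Main.v *)
Require Import Defs.
From mathcomp Require Import all_boot all_order all_algebra.
From mathcomp Require Import ring lra zify.
Import GRing.Theory Num.Theory.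
Local Open Scope ring_scope.

Section S.
Variable R : numFieldType.
Local Notation B := (@bern R).

Lemma size_bern_list n : size (bern_list R n) = n.+1.
Proof. by elim: n => [|n IH] //=; rewrite size_rcons IH. Qed.

Lemma bern_listE n k : (k <= n)%N -> nth 0 (bern_list R n) k = B k.
Proof.
elim: n k => [|n IH] k.
  by rewrite leqn0 => /eqP ->.
rewrite leq_eqVlt => /orP [/eqP ->|hk]; first by [].
rewrite /= nth_rcons size_bern_list hk; exact: IH.
Qed.

Lemma bernS m : B m.+1 = - (m.+2%:R)^-1 *
   \sum_(k < m.+1) ('C(m.+2, k))%:R * B k.
Proof.
rewrite /bern /= nth_rcons size_bern_list ltnn eqxx.
congr (_ * _); apply: eq_bigr => k _; rewrite bern_listE //.
by rewrite -ltnS.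
Qed.

Lemma bern0 : B 0 = 1. Proof. by []. Qed.
Lemma bern1 : B 1 = - 2%:R^-1.
Proof. rewrite bernS big_ord1 bern0 /= bin0 mulr1 mulr1; by []. Qed.

Lemma bern_sum N : \sum_(k < N.+1) ('C(N, k))%:R * B k = B N + (N == 1%N)%:R.
Proof.
case: N => [|[|m]].
- by rewrite big_ord1 bin0 mul1r addr0.
- by rewrite big_ord_recr big_ord1 /= bin0 bin1 bern0 !mul1r addrC.
rewrite big_ord_recr /= big_ord_recr /= bernS binn binSn mul1r addr0.
set S := \sum_(i < m.+1) _.
have h : (m.+2%:R : R) != 0 by rewrite pnatr_eq0.
rewrite mulrA mulrN mulfV // mulN1r addrN add0r //.
Qed.
Lemma binC2 n k i : ('C(n,k) * 'C(n-k,i) = 'C(n,i) * 'C(n-i,k))%N.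
Proof.
case: (leqP (k + i) n) => h; last first.
  case: (leqP k n) => hk; last first.
    have -> : 'C(n-i,k) = 0%N by apply: bin_small; lia.
    by rewrite (bin_small hk) muln0 mul0n.
  have -> : 'C(n-k,i) = 0%N by apply: bin_small; lia.
  case: (leqP i n) => hi; last by rewrite (bin_small hi) !muln0.
  have -> : 'C(n-i,k) = 0%N by apply: bin_small; lia.
  by rewrite !muln0.
have hk : (k <= n)%N by lia.
have hi : (i <= n)%N by lia.
have hki : (i <= n - k)%N by lia.
have hik : (k <= n - i)%N by lia.
have hp : (0 < k`! * i`! * (n - k - i)`!)%N by rewrite !muln_gt0 !fact_gt0.
apply/eqP; rewrite -(eqn_pmul2r hp); apply/eqP.
have e1 := bin_fact hk. have e2 := bin_fact hki.
have e3 := bin_fact hi. have e4 := bin_fact hik.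
have e5 : (n - i - k = n - k - i)%N by lia.
rewrite e5 in e4.
have -> : ('C(n, k) * 'C(n - k, i) * (k`! * i`! * (n - k - i)`!) = 
   ('C(n, k) * (k`! * ('C(n - k, i) * (i`! * (n - k - i)`!)))))%N by ring.
rewrite e2 e1.
have -> : ('C(n, i) * 'C(n - i, k) * (k`! * i`! * (n - k - i)`!) = 
   ('C(n, i) * (i`! * ('C(n - i, k) * (k`! * (n - k - i)`!)))))%N by ring.
by rewrite e4 e3.
Qed.

Lemma sum_ext0 (F : nat -> R) m n : (m <= n)%N ->
  (forall k, (m < k)%N -> F k = 0) ->
  \sum_(k < n.+1) F k = \sum_(k < m.+1) F k.
Proof.
move=> hmn hF; rewrite (@big_ord_widen _ _ _ m.+1 n.+1 F) ?ltnS // [RHS]big_mkcond /=.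
apply: eq_bigr => k _; case: ifP => // h; rewrite hF //; lia.
Qed.

Lemma sum_sel n (x : R) :
  \sum_(i < n.+1) ('C(n, i))%:R * x ^+ i * ((n - i)%N == 1%N)%:R
  = n%:R * x ^+ n.-1.
Proof.
case: n => [|m]; first by rewrite big_ord1 mulr0 mul0r.
rewrite big_ord_recr /= subnn mulr0 addr0 big_ord_recr /=.
rewrite subSnn eqxx mulr1 binSn /= big1 ?add0r // => i _.
have /negbTE -> : ((m.+1 - i)%N != 1%N) by have := ltn_ord i; lia.
by rewrite mulr0.
Qed.

Lemma bernpoly_shift n (x : R) :
  bernpoly n (x + 1) = bernpoly n x + n%:R * x ^+ n.-1.
Proof.
rewrite /bernpoly.
transitivity (\sum_(k < n.+1) \sum_(i < n.+1)
   ('C(n, k))%:R * B k * (('C(n - k, i))%:R * x ^+ i)).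
  apply: eq_bigr => k _; rewrite exprD1n mulr_sumr.
  rewrite (sum_ext0 (fun i => ('C(n, k))%:R * B k * (('C(n - k, i))%:R * x ^+ i)) (n - k) n (leq_subr k n)).
    by apply: eq_bigr => i _; congr (_ * _); rewrite mulr_natl.
  by move=> i hi; rewrite (bin_small hi) mul0r mulr0.
rewrite exchange_big /=.
transitivity (\sum_(i < n.+1) ('C(n, i))%:R * x ^+ i * (B (n - i) + ((n - i)%N == 1%N)%:R)).
  apply: eq_bigr => i _; rewrite -bern_sum.
  have e0 := (sum_ext0 (fun k => ('C(n - i, k))%:R * B k) (n - i) n (leq_subr i n)).
  rewrite /= in e0; rewrite -e0; last first.
    by move=> k hk; rewrite (bin_small hk) mul0r.
  rewrite mulr_sumr; apply: eq_bigr => k _.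
  have := binC2 n k i => /(congr1 (fun m => m%:R : R)); rewrite !natrM => e.
  transitivity ((('C(n, k))%:R * ('C(n - k, i))%:R) * B k * x ^+ i); first by ring.
  by rewrite e; ring.
transitivity (\sum_(i < n.+1) ('C(n, i))%:R * x ^+ i * B (n - i) +
  \sum_(i < n.+1) ('C(n, i))%:R * x ^+ i * ((n - i)%N == 1%N)%:R).
  by rewrite -big_split; apply: eq_bigr => i _; rewrite mulrDr.
rewrite sum_sel; congr (_ + _).
rewrite (reindex_inj rev_ord_inj) /=; apply: eq_bigr => i _.
have hi : (i <= n)%N by have := ltn_ord i; lia.
rewrite subKn // bin_sub //; ring.
Qed.

Lemma bernpoly0 n : bernpoly n (0 : R) = B n.
Proof.
rewrite /bernpoly big_ord_recr /= subnn expr0 binn mulr1 mul1r big1 ?add0r //.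
move=> i _; rewrite expr0n.
have /negbTE -> : ((n - i)%N != 0%N) by have := ltn_ord i; lia.
by rewrite mulr0.
Qed.

Lemma bern_neg n : \sum_(k < n.+1) ('C(n, k))%:R * B k * (-1) ^+ (n - k)
  = B n - n%:R * (-1) ^+ n.-1.
Proof.
have := bernpoly_shift n (-1); rewrite addNr bernpoly0 => ->.
by rewrite /bernpoly addrK.
Qed.

Lemma sign_sub N k : (k <= N)%N -> (-1) ^+ (N - k) = (-1) ^+ N * (-1) ^+ k :> R.
Proof.
move=> hk; rewrite -{2}(subnK hk) exprD -mulrA -expr2 sqrr_sign mulr1 //.
Qed.

Lemma bern_sign n : (-1) ^+ n * B n = B n + (n == 1%N)%:R.
Proof.
elim/ltn_ind: n => n IH; case: n IH => [|[|m]] IH.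
- by rewrite expr0 mul1r addr0.
- by rewrite bern1 expr1 /=; field.
have -> : (m.+2 == 1%N) = false by []. rewrite addr0.
set s := (-1) ^+ m.+2 : R.
have hs : s * s = 1 by rewrite -expr2 sqrr_sign.
have E := bern_neg m.+3.
rewrite big_ord_recr /= big_ord_recr /= subnn subSnn expr0 expr1 binn binSn mulr1 in E.
have e1 : \sum_(k < m.+2) ('C(m.+3, k))%:R * B k * (-1) ^+ (m.+3 - k)
   = - s * (\sum_(k < m.+2) ('C(m.+3, k))%:R * B k +
            \sum_(k < m.+2) ('C(m.+3, k))%:R * (((k : nat) == 1%N)%:R)).
  rewrite -big_split mulr_sumr; apply: eq_bigr => k _.
  have hk : (k < m.+2)%N := ltn_ord k.
  rewrite sign_sub; last by lia.
  have -> : (-1) ^+ m.+3 = - s :> R by rewrite exprS mulN1r.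
  have := IH k hk => ek.
  transitivity (- s * 'C(m.+3, k)%:R * ((-1) ^+ k * B k)); first by ring.
  by rewrite ek /=; ring.
have e2 : \sum_(k < m.+2) ('C(m.+3, k))%:R * (((k : nat) == 1%N)%:R) = m.+3%:R :> R.
  rewrite big_ord_recl /= big_ord_recl /= big1 ?mulr0 ?mulr1 ?add0r ?addr0 ?bin1 //.
  by move=> i _; rewrite mulr0.
have e3 := bern_sum m.+3.
rewrite big_ord_recr /= big_ord_recr /= binn binSn mul1r addr0 in e3.
have e4 : \sum_(k < m.+2) ('C(m.+3, k))%:R * B k = - (m.+3%:R * B m.+2) :> R.
  apply/eqP; rewrite -subr_eq0 opprK; apply/eqP.
  by move: e3 => /(congr1 (fun t => t - B m.+3)); rewrite addrK subrr.
rewrite e1 e2 e4 in E.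
have hN : (m.+3%:R : R) != 0 by rewrite pnatr_eq0.
have hs3 : (-1) ^+ m.+3 = - s :> R by rewrite exprS mulN1r.
idtac.
have : m.+3%:R * (s * B m.+2 - B m.+2) = 0.
  rewrite -/s in E.
  transitivity ((- s * (- (m.+3%:R * B m.+2) + m.+3%:R) + m.+3%:R * B m.+2 * -1 +
    1 * B m.+3) - (B m.+3 - m.+3%:R * s)); first ring.
  by rewrite E subrr.
move/eqP; rewrite mulf_eq0 (negbTE hN) /= subr_eq0 => /eqP //.
Qed.

Lemma bump0 i : bump 0 i = i.+1. Proof. by []. Qed.

Lemma poch_neg k q : (q <= k)%N ->
  poch (- k%:R) q = (-1) ^+ q * (k ^_ q)%:R :> R.
Proof.
elim: q => [|q IH] hq; first by rewrite /poch big_ord0 expr0 ffactn0 mulr1.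
rewrite /poch big_ord_recr /= -/(poch _ _) IH; last by lia.
rewrite ffactnSr natrM natrB; last by lia.
rewrite exprS; ring.
Qed.

Definition Gop (kr kr1 : nat) (h : nat -> R) : R :=
  - (kr.+1%:R)^-1 * h (kr1 + kr).+1
  - 2%:R^-1 * h (kr1 + kr)%N
  + \sum_(1 <= q < kr.+1)
      poch (- kr%:R) q * B q.+1 / (q.+1)`!%:R * h (kr1 + kr - q)%N.

Lemma zetaR_G n kr kr1 rest t :
  zetaR n.+1 (kr :: kr1 :: rest) t = Gop kr kr1 (fun m => zetaR n (m :: rest) t).
Proof. by []. Qed.

Lemma Gop_lin kr kr1 h1 h2 :
  Gop kr kr1 h1 - Gop kr kr1 h2 = Gop kr kr1 (fun m => h1 m - h2 m).
Proof.
rewrite /Gop.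
have -> : \sum_(1 <= q < kr.+1) poch (- kr%:R) q * B q.+1 / (q.+1)`!%:R * (h1 (kr1 + kr - q)%N - h2 (kr1 + kr - q)%N)
  = \sum_(1 <= q < kr.+1) poch (- kr%:R) q * B q.+1 / (q.+1)`!%:R * h1 (kr1 + kr - q)%N
  - \sum_(1 <= q < kr.+1) poch (- kr%:R) q * B q.+1 / (q.+1)`!%:R * h2 (kr1 + kr - q)%N.
  by rewrite -sumrB; apply: eq_bigr => i _; rewrite mulrBr.
ring.
Qed.

Lemma Gop_scale kr kr1 c h :
  Gop kr kr1 (fun m => c * h m) = c * Gop kr kr1 h.
Proof.
rewrite /Gop.
have -> : \sum_(1 <= q < kr.+1) poch (- kr%:R) q * B q.+1 / (q.+1)`!%:R * (c * h (kr1 + kr - q)%N)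
  = c * \sum_(1 <= q < kr.+1) poch (- kr%:R) q * B q.+1 / (q.+1)`!%:R * h (kr1 + kr - q)%N.
  by rewrite mulr_sumr; apply: eq_bigr => i _; ring.
ring.
Qed.

Lemma Gop_ext kr kr1 h1 h2 : h1 =1 h2 -> Gop kr kr1 h1 = Gop kr kr1 h2.
Proof.
move=> e; rewrite /Gop !e; congr (_ + _); apply: eq_bigr => i _; by rewrite e.
Qed.

Lemma depth2 kr a (x : R) :
  Gop kr a (fun m => - x ^+ m) = x ^+ a * (bernpoly kr.+1 (x + 1) / kr.+1%:R).
Proof.
rewrite bernpoly_shift /bernpoly /Gop.
rewrite big_ord_recl big_ord_recl /=.
rewrite big_add1 big_mkord /=.
set S := \sum_(i < kr) _.
set T := \sum_(i < kr) _.
have hk : (kr.+1%:R : R) != 0 by rewrite pnatr_eq0.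
have hST : S = (x ^+ a / kr.+1%:R) * T.
  rewrite /S /T mulr_sumr; apply: eq_bigr => i _.
  have hi : (i < kr)%N := ltn_ord i.
  rewrite !bump0 poch_neg; last by lia.
  have hC : ('C(kr.+1, i.+2))%:R = kr.+1%:R * (kr ^_ i.+1)%:R / (i.+2)`!%:R :> R.
    have e : ('C(kr.+1, i.+2))%:R * (i.+2)`!%:R = kr.+1%:R * (kr ^_ i.+1)%:R :> R.
      by rewrite -!natrM bin_ffact ffactSS.
    rewrite -e; field; by rewrite pnatr_eq0 -lt0n fact_gt0.
  have hb : (-1) ^+ i.+1 * B i.+2 = - B i.+2.
    have := bern_sign i.+2; rewrite (_ : (i.+2 == 1%N) = false) // addr0 exprS => h.
    transitivity (- (-1 * (-1) ^+ i.+1 * B i.+2)); first ring.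
    by rewrite h.
  have hx : x ^+ (a + kr - i.+1) = x ^+ a * x ^+ (kr.+1 - i.+2).
    by rewrite -exprD; congr (_ ^+ _); lia.
  rewrite hC hx.
  transitivity (((-1) ^+ i.+1 * B i.+2) * - ((kr ^_ i.+1)%:R / (i.+2)`!%:R * (x ^+ a * x ^+ (kr.+1 - i.+2)))); first by ring.
  rewrite hb; field; by rewrite pnatr_eq0 -lt0n fact_gt0 -mulrS pnatr_eq0.
rewrite hST bin0 bern0 bin1 bern1 !bump0 subn0 subSS subn0.
rewrite -addnS !exprD.
have h2 : (2%:R : R) != 0 by rewrite pnatr_eq0.
field; by rewrite -mulrS pnatr_eq0.
Qed.

Lemma zeta1_diff k (z : R) :
  zetaR 1 [:: k] z - zetaR 1 [:: k] (z - 1) = - (z - 1) ^+ k.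
Proof.
rewrite /=; set x := z - 1.
rewrite -{1}(subrK 1 z) -/x bernpoly_shift /=.
field; by rewrite -mulrS pnatr_eq0.
Qed.

Lemma main_diff n : forall rs0 a (z : R), size rs0 = n ->
  zetaR n.+1 (rcons rs0 a) z - zetaR n.+1 (rcons rs0 a) (z - 1)
  = - (z - 1) ^+ a * zetaR n rs0 z.
Proof.
elim: n => [|n IH] rs0 a z hs.
  case: rs0 hs => // _; by rewrite /= zeta1_diff mulr1.
case: rs0 hs => [|kr [|kr1 rest]] // hs.
  have -> : rcons [:: kr] a = [:: kr; a] by [].
  have -> : n = 0%N by case: hs.
  rewrite (zetaR_G 1 kr a [::]) (zetaR_G 1 kr a [::]) Gop_lin.
  rewrite (@Gop_ext kr a _ (fun m => - (z - 1) ^+ m)); last by move=> m; exact: zeta1_diff.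
  rewrite depth2 subrK /=; ring.
case: hs => hs.
have -> : rcons [:: kr, kr1 & rest] a = [:: kr, kr1 & rcons rest a] by [].
rewrite (zetaR_G n.+1 kr kr1 (rcons rest a)) (zetaR_G n.+1 kr kr1 (rcons rest a)) Gop_lin.
rewrite (zetaR_G n kr kr1 rest) -Gop_scale.
apply: Gop_ext => m.
exact: (IH (m :: rest) a z).
Qed.

Lemma ncmul_Ylin (c : nat -> R) (G : ncseries R) w :
  ncmul (Ylin c) G w = if w is n1 :: w' then c n1 * G w' else 0.
Proof.
rewrite /ncmul; case: w => [|n1 w'].
  by rewrite big_ord1 /= mul0r.
rewrite /= big_ord_recl /= mul0r add0r big_ord_recl /= take0 drop0.
case: w' => [|h t]; first by rewrite big_ord0 addr0.
by rewrite big1 ?addr0 // => i _; rewrite /= mul0r.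
Qed.

Lemma part1 (z : R) w :
  Dminus (@HB R) z w = - ncmul (Ylin (fun k => (z - 1) ^+ k)) (HB z) w.
Proof.
rewrite ncmul_Ylin /Dminus /HB /zeta.
case: w => [|n1 w'] /=; first by rewrite subrr oppr0.
rewrite rev_cons main_diff ?size_rev //; ring.
Qed.

End S.

Theorem theoremC (R : numFieldType) (z : R) :
  (forall w : seq nat,
     Dminus (@HB R) z w = - ncmul (Ylin (fun k => (z - 1) ^+ k)) (HB z) w)
  /\
  (forall w : seq nat,
     HB (z + 1) w - HB z w = - ncmul (Ylin (fun k => z ^+ k)) (HB (z + 1)) w).
Proof.
split => w; first exact: part1.
have := @part1 R (z + 1) w; rewrite /Dminus addrK; by [].
Qed.
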